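(* For any small category $\mathcal C$ and endofunctor $T:\mathcal C\to\mathcal C$, the simplicial groupoid $\mathcal NC^T_\bullet(\mathcal C)$ is unital $2$-Segal.
   Context: For simplicial groupoids, $X_I:=X_k$ for ordered $I$ with $|I|=k+1$; $\times^R$ = $2$-pullback; weak equivalence = equivalence of groupoids. $X_\bullet$ is $2$-Segal if for every $n\ge3$, $0\le i<j\le n$, $X_n\to X_{\{i,\dots,j\}}\times^R_{X_{\{i,j\}}}X_{\{0,\dots,i,j,\dots,n\}}$ is an equivalence; unital $2$-Segal if moreover for $n\ge2$, $0\le i\le n-1$, $\partial_{\{i\}}\times s_i:X_{n-1}\to X_{\{i\}}\times^R_{X_{\{i,i+1\}}}X_n$ is an equivalence ($\partial_{\{i\}}$ restriction to vertex $i$, $X_{\{i\}}\to X_{\{i,i+1\}}$ the degeneracy $s_0$). $\mathcal NC^T_n(\mathcal C)$ is the groupoid of diagrams $x_0\xrightarrow{f_0}x_1\xrightarrow{f_1}\cdots\xrightarrow{f_{n-1}}x_n\xrightarrow{f_n}T(x_0)$ in $\mathcal C$, morphisms being families of isomorphisms $x_i\to y_i$, $0\le i\le n$, making all squares commute (the last square using $T$ of the $0$th isomorphism). For $1\le i\le n$, $\partial_i$ omits $x_i$ and composes $f_i\circ f_{i-1}$; $\partial_0$ gives $x_1\to\dots\to x_n\xrightarrow{T(f_0)\circ f_n}T(x_1)$; degeneracies insert identities. *)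

(* Defs.v *)
From mathcomp Require Import all_boot zify.
From Stdlib Require Import ProofIrrelevance FunctionalExtensionality.

Set Implicit Arguments.
Unset Strict Implicit.
Unset Printing Implicit Defensive.

Record Category := Cat {
  ob :> Type;
  hom : ob -> ob -> Type;
  idm : forall a, hom a a;
  compm : forall a b c, hom b c -> hom a b -> hom a c;
  comp1m : forall a b (f : hom a b), compm (idm b) f = f;
  compm1 : forall a b (f : hom a b), compm f (idm a) = f;
  compA : forall a b c d (f : hom a b) (g : hom b c) (h : hom c d),
    compm h (compm g f) = compm (compm h g) f }.

Definition is_iso (C : Category) (a b : C) (f : hom a b) : Prop :=
  exists g : hom b a, compm g f = idm a /\ compm f g = idm b.

Record Functor (A B : Category) := Fun {
  fob :> A -> B;
  fmap : forall a b : A, hom a b -> hom (fob a) (fob b);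
  fmap_id : forall a : A, fmap (idm a) = idm (fob a);
  fmap_comp : forall (a b c : A) (f : hom a b) (g : hom b c),
    fmap (compm g f) = compm (fmap g) (fmap f) }.

Definition is_equivalence (A B : Category) (F : Functor A B) : Prop :=
  exists (G : Functor B A) (eta : forall a : A, hom a (G (F a)))
         (eps : forall b : B, hom (F (G b)) b),
    [/\ (forall a, is_iso (eta a)),
        (forall b, is_iso (eps b)),
        (forall (a a' : A) (f : hom a a'),
            compm (eta a') f = compm (fmap G (fmap F f)) (eta a)) &
        (forall (b b' : B) (g : hom b b'),
            compm g (eps b) = compm (eps b') (fmap F (fmap G g)))].

Lemma iso_id (C : Category) (a : C) : is_iso (idm a).
Proof. by exists (idm a); rewrite comp1m. Qed.

Lemma iso_comp (C : Category) (a b c : C) (f : hom a b) (g : hom b c) :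
  is_iso f -> is_iso g -> is_iso (compm g f).
Proof.
move=> [f' [f1 f2]] [g' [g1 g2]]; exists (compm f' g'); split.
- by rewrite compA -(compA g) g1 compm1.
- by rewrite compA -(compA f') f2 compm1.
Qed.

Section Pullback.
Variables (A B C : Category) (F : Functor A B) (G : Functor C B).

Record pb_ob := PbOb {
  pb_a : A; pb_c : C; pb_phi : hom (F pb_a) (G pb_c); pb_phi_iso : is_iso pb_phi }.

Record pb_hom (x y : pb_ob) := PbHom {
  pb_u : hom (pb_a x) (pb_a y);
  pb_v : hom (pb_c x) (pb_c y);
  pb_sq : compm (fmap G pb_v) (pb_phi x) = compm (pb_phi y) (fmap F pb_u) }.

Lemma pb_hom_ext x y (f g : pb_hom x y) :
  pb_u f = pb_u g -> pb_v f = pb_v g -> f = g.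
Proof.
case: f g => u v s [u' v' s'] /= eu ev; subst; f_equal; exact: proof_irrelevance.
Qed.

Definition pb_id_hom (x : pb_ob) : pb_hom x x.
Proof. refine (@PbHom x x (idm _) (idm _) _); by rewrite !fmap_id comp1m compm1. Defined.

Definition pb_comp_hom (x y z : pb_ob) (g : pb_hom y z) (f : pb_hom x y) : pb_hom x z.
Proof.
refine (@PbHom x z (compm (pb_u g) (pb_u f)) (compm (pb_v g) (pb_v f)) _).
by rewrite !fmap_comp -compA (pb_sq f) compA (pb_sq g) -compA.
Defined.

Definition Pullback : Category.
Proof.
refine (@Cat pb_ob pb_hom pb_id_hom pb_comp_hom _ _ _).
- by move=> a b f; apply: pb_hom_ext; rewrite /= comp1m.
- by move=> a b f; apply: pb_hom_ext; rewrite /= compm1.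
- by move=> a b c d f g h; apply: pb_hom_ext; rewrite /= compA.
Defined.

Section PbPair.
Variables (X : Category) (P : Functor X A) (Q : Functor X C)
  (th : forall x : X, hom (F (P x)) (G (Q x))).
Hypothesis th_iso : forall x, is_iso (th x).
Hypothesis th_nat : forall (x y : X) (f : hom x y),
  compm (fmap G (fmap Q f)) (th x) = compm (th y) (fmap F (fmap P f)).

Definition pb_pair_ob (x : X) : Pullback := PbOb (th_iso x).
Definition pb_pair_hom (x y : X) (f : hom x y) :
  @hom Pullback (pb_pair_ob x) (pb_pair_ob y) :=
  @PbHom (pb_pair_ob x) (pb_pair_ob y) (fmap P f) (fmap Q f) (th_nat f).

Definition pb_pair : Functor X Pullback.
Proof.
refine (@Fun X Pullback pb_pair_ob pb_pair_hom _ _).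
- by move=> a; apply: pb_hom_ext; rewrite /= !fmap_id.
- by move=> a b c f g; apply: pb_hom_ext; rewrite /= !fmap_comp.
Defined.
End PbPair.
End Pullback.

Definition mono_ord (k n : nat) (f : 'I_k.+1 -> 'I_n.+1) : Prop :=
  forall a b : 'I_k.+1, a <= b -> f a <= f b.

Section NC.
Variables (C : Category) (T : Functor C C).

(* An object of NC^T_n(C): a diagram
      x_0 -> x_1 -> ... -> x_n -> T(x_0)
   recorded together with all its composites:
   vg i j : x_i -> x_j  (i <= j)   and   vh i j : x_j -> T(x_i)  (i <= j). *)
Record NCob (n : nat) := NCOb {
  vx : 'I_n.+1 -> C;
  vg : forall i j : 'I_n.+1, i <= j -> hom (vx i) (vx j);
  vh : forall i j : 'I_n.+1, i <= j -> hom (vx j) (T (vx i));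
  vg_id : forall (i : 'I_n.+1) (H : i <= i), vg H = idm (vx i);
  vg_comp : forall (i j k : 'I_n.+1) (Hij : i <= j) (Hjk : j <= k) (Hik : i <= k),
      compm (vg Hjk) (vg Hij) = vg Hik;
  vh_g : forall (i j k : 'I_n.+1) (Hij : i <= j) (Hjk : j <= k) (Hik : i <= k),
      compm (vh Hik) (vg Hjk) = vh Hij;
  vg_h : forall (i j k : 'I_n.+1) (Hij : i <= j) (Hjk : j <= k) (Hik : i <= k),
      compm (fmap T (vg Hij)) (vh Hik) = vh Hjk }.

Record NChom (n : nat) (A B : NCob n) := NCHom {
  hu : forall t : 'I_n.+1, hom (vx A t) (vx B t);
  hu_iso : forall t, is_iso (hu t);
  hu_g : forall (i j : 'I_n.+1) (H : i <= j),
      compm (hu j) (vg A H) = compm (vg B H) (hu i);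
  hu_h : forall (i j : 'I_n.+1) (H : i <= j),
      compm (fmap T (hu i)) (vh A H) = compm (vh B H) (hu j) }.

Lemma NChom_ext n (A B : NCob n) (f g : NChom A B) :
  (forall t, hu f t = hu g t) -> f = g.
Proof.
case: f g => u ui ug uh [v vi vg' vh'] /= e.
have ee : u = v by apply: functional_extensionality_dep.
subst; f_equal; exact: proof_irrelevance.
Qed.

Definition NC_id n (A : NCob n) : NChom A A.
Proof.
refine (@NCHom n A A (fun t => idm _) (fun t => iso_id _) _ _).
- by move=> i j H; rewrite comp1m compm1.
- by move=> i j H; rewrite fmap_id comp1m compm1.
Defined.

Definition NC_comp n (A B D : NCob n) (g : NChom B D) (f : NChom A B) : NChom A D.
Proof.
refine (@NCHom n A D (fun t => compm (hu g t) (hu f t))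
          (fun t => iso_comp (hu_iso f t) (hu_iso g t)) _ _).
- by move=> i j H; rewrite -compA (hu_g f) compA (hu_g g) -compA.
- by move=> i j H; rewrite fmap_comp -compA (hu_h f) compA (hu_h g) -compA.
Defined.

Definition NC (n : nat) : Category.
Proof.
refine (@Cat (NCob n) (@NChom n) (@NC_id n) (@NC_comp n) _ _ _).
- by move=> a b f; apply: NChom_ext => t /=; rewrite comp1m.
- by move=> a b f; apply: NChom_ext => t /=; rewrite compm1.
- by move=> a b c d f g h; apply: NChom_ext => t /=; rewrite compA.
Defined.

Section Restriction.
Variables (k n : nat) (al : 'I_k.+1 -> 'I_n.+1) (mal : mono_ord al).

Definition res_ob (A : NCob n) : NCob k.
Proof.
refine (@NCOb k (fun t => vx A (al t))
          (fun i j H => vg A (mal H)) (fun i j H => vh A (mal H)) _ _ _ _).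
- move=> i H; rewrite vg_id //.
- move=> i j l Hij Hjl Hil; exact: vg_comp.
- move=> i j l Hij Hjl Hil; exact: vh_g.
- move=> i j l Hij Hjl Hil; exact: vg_h.
Defined.

Definition res_hom (A B : NCob n) (f : NChom A B) : NChom (res_ob A) (res_ob B).
Proof.
refine (@NCHom k (res_ob A) (res_ob B) (fun t => hu f (al t))
          (fun t => hu_iso f (al t)) _ _).
- by move=> i j H; exact: (hu_g f (mal H)).
- by move=> i j H; exact: (hu_h f (mal H)).
Defined.

Definition res : Functor (NC n) (NC k).
Proof.
refine (@Fun (NC n) (NC k) res_ob res_hom _ _).
- by move=> a; apply: NChom_ext.
- by move=> a b c f g; apply: NChom_ext.
Defined.
End Restriction.

Definition eqhom n (x : 'I_n.+1 -> C) (a b : 'I_n.+1) (e : a = b) : hom (x a) (x b) :=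
  match e in _ = b' return hom (x a) (x b') with erefl => idm (x a) end.

Lemma eqhom_iso n (x : 'I_n.+1 -> C) a b (e : a = b) : is_iso (eqhom x e).
Proof. by case: b / e; exact: iso_id. Qed.

Lemma eqhom_vg n (A : NCob n) (a b a' b' : 'I_n.+1) (ea : a = a') (eb : b = b')
  (P : a <= b) (P' : a' <= b') :
  compm (eqhom (vx A) eb) (vg A P) = compm (vg A P') (eqhom (vx A) ea).
Proof.
case: a' / ea P'; case: b' / eb => P' /=.
by rewrite comp1m compm1 (bool_irrelevance P P').
Qed.

Lemma eqhom_vh n (A : NCob n) (a b a' b' : 'I_n.+1) (ea : a = a') (eb : b = b')
  (P : a <= b) (P' : a' <= b') :
  compm (fmap T (eqhom (vx A) ea)) (vh A P) = compm (vh A P') (eqhom (vx A) eb).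
Proof.
case: a' / ea P'; case: b' / eb => P' /=.
by rewrite fmap_id comp1m compm1 (bool_irrelevance P P').
Qed.

Lemma eqhom_nat n (A B : NCob n) (f : NChom A B) (a a' : 'I_n.+1) (e : a = a') :
  compm (hu f a') (eqhom (vx A) e) = compm (eqhom (vx B) e) (hu f a).
Proof. by case: a' / e => /=; rewrite comp1m compm1. Qed.

Section Square.
Variables (n k k' l : nat)
  (al : 'I_k.+1 -> 'I_n.+1) (mal : mono_ord al)
  (al' : 'I_k'.+1 -> 'I_n.+1) (mal' : mono_ord al')
  (ga : 'I_l.+1 -> 'I_k.+1) (mga : mono_ord ga)
  (ga' : 'I_l.+1 -> 'I_k'.+1) (mga' : mono_ord ga')
  (e : forall t, al (ga t) = al' (ga' t)).

Definition sq_theta (A : NCob n) :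
  @hom (NC l) (res mga (res mal A)) (res mga' (res mal' A)).
Proof.
refine (@NCHom l (res mga (res mal A)) (res mga' (res mal' A))
          (fun t => eqhom (vx A) (e t)) (fun t => eqhom_iso _ (e t)) _ _).
- by move=> i j H /=; exact: eqhom_vg.
- by move=> i j H /=; exact: eqhom_vh.
Defined.

Definition sq_theta_inv (A : NCob n) :
  @hom (NC l) (res mga' (res mal' A)) (res mga (res mal A)).
Proof.
refine (@NCHom l (res mga' (res mal' A)) (res mga (res mal A))
          (fun t => eqhom (vx A) (esym (e t)))
          (fun t => eqhom_iso (vx A) (esym (e t))) _ _).
- by move=> i j H /=; exact: eqhom_vg.
- by move=> i j H /=; exact: eqhom_vh.
Defined.

Lemma sq_theta_iso (A : NCob n) : is_iso (sq_theta A).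
Proof.
exists (sq_theta_inv A); split; apply: NChom_ext => t /=;
  by case: (al' (ga' t)) / (e t) => /=; rewrite comp1m.
Qed.

Lemma sq_theta_nat (A B : NC n) (f : hom A B) :
  compm (fmap (res mga') (fmap (res mal') f)) (sq_theta A) =
  compm (sq_theta B) (fmap (res mga) (fmap (res mal) f)).
Proof. by apply: NChom_ext => t /=; exact: eqhom_nat. Qed.

Definition sq_map : Functor (NC n) (Pullback (res mga) (res mga')) :=
  @pb_pair (NC k) (NC l) (NC k') (res mga) (res mga') (NC n) (res mal) (res mal')
    sq_theta sq_theta_iso sq_theta_nat.
End Square.
End NC.

Lemma inord_val (m x : nat) : x <= m -> nat_of_ord (@inord m x) = x.
Proof. by move=> h; rewrite inordK // ltnS. Qed.

Section SegalMaps.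
Variables (n i j : nat) (Hij : i < j) (Hjn : j <= n).

(* X_n -> X_{i,...,j}  (I = {i,...,j}, |I| = (j - i) + 1) *)
Definition alI : 'I_(j - i).+1 -> 'I_n.+1 := fun t => inord (i + t).
(* X_n -> X_{0,...,i,j,...,n}  (|J| = n - (j - i) + 2) *)
Definition alJ : 'I_(n - (j - i)).+2 -> 'I_n.+1 :=
  fun t => inord (if t <= i then nat_of_ord t else t + (j - i) - 1).
(* X_{i,...,j} -> X_{i,j} : the vertices i, j are in positions 0, j - i of I *)
Definition gaI : 'I_2 -> 'I_(j - i).+1 := fun t => inord (t * (j - i)).
(* X_{0,..,i,j,..,n} -> X_{i,j} : the vertices i, j are in positions i, i+1 of J *)
Definition gaJ : 'I_2 -> 'I_(n - (j - i)).+2 := fun t => inord (i + t).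

Lemma mono_alI : mono_ord alI.
Proof.
move=> a b ab; have := ltn_ord a; have := ltn_ord b; rewrite /alI => ha hb.
rewrite !inord_val; lia.
Qed.

Lemma mono_alJ : mono_ord alJ.
Proof.
move=> a b ab; have := ltn_ord a; have := ltn_ord b; rewrite /alJ => ha hb.
case: ifP => ai; case: ifP => bi; rewrite !inord_val; lia.
Qed.

Lemma mono_gaI : mono_ord gaI.
Proof.
move=> a b ab; have := ltn_ord a; have := ltn_ord b; rewrite /gaI => ha hb.
have Hl : forall t : 'I_2, t * (j - i) <= j - i.
  by case=> [[|[|t]]] //= _; rewrite ?mul0n ?mul1n.
rewrite !inord_val ?Hl //; exact: leq_mul.
Qed.

Lemma mono_gaJ : mono_ord gaJ.
Proof.
move=> a b ab; have := ltn_ord a; have := ltn_ord b; rewrite /gaJ => ha hb.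
rewrite !inord_val; lia.
Qed.

Lemma segal_sq_eq : forall t : 'I_2, alI (gaI t) = alJ (gaJ t).
Proof.
case=> [[|[|t]]] // ht; apply: val_inj; rewrite /alI /alJ /gaI /gaJ /=.
- rewrite mul0n.
  have -> : nat_of_ord (@inord (j - i) 0) = 0 by rewrite inord_val.
  have -> : nat_of_ord (@inord (n - (j - i)).+1 (i + 0)) = i
    by rewrite inord_val; lia.
  by rewrite leqnn addn0.
- rewrite mul1n.
  have -> : nat_of_ord (@inord (j - i) (j - i)) = j - i by rewrite inord_val.
  have -> : nat_of_ord (@inord (n - (j - i)).+1 (i + 1)) = i + 1
    by rewrite inord_val; lia.
  have -> : (i + 1 <= i) = false by lia.
  congr (nat_of_ord (inord _)); lia.
Qed.

(* the comparison functor  X_n -> X_{i..j}  x^R_{X_{i,j}}  X_{0..i,j..n} *)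
Definition segal_map (C : Category) (T : Functor C C) :=
  @sq_map C T n (j - i) (n - (j - i)).+1 1 alI mono_alI alJ mono_alJ
    gaI mono_gaI gaJ mono_gaJ segal_sq_eq.
End SegalMaps.

Section UnitMaps.
Variables (m i : nat) (Him : i <= m).
(* here n = m + 1 in the paper's notation; i ranges over 0 <= i <= n - 1 *)

Definition alV : 'I_1 -> 'I_m.+1 := fun _ => inord i.
(* s_i : X_{n-1} -> X_n, along sigma_i : [n] -> [n-1] (hitting i twice) *)
Definition alS : 'I_m.+2 -> 'I_m.+1 :=
  fun t => inord (if t <= i then nat_of_ord t else t.-1).
(* s_0 : X_{\{i\}} -> X_{\{i,i+1\}} *)
Definition gaV : 'I_2 -> 'I_1 := fun _ => ord0.
Definition gaS : 'I_2 -> 'I_m.+2 := fun t => inord (i + t).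

Lemma mono_alV : mono_ord alV.
Proof. by move=> a b _; rewrite /alV. Qed.

Lemma mono_alS : mono_ord alS.
Proof.
move=> a b ab; have := ltn_ord a; have := ltn_ord b; rewrite /alS => ha hb.
case: ifP => ai; case: ifP => bi; rewrite !inord_val; lia.
Qed.

Lemma mono_gaV : mono_ord gaV.
Proof. by []. Qed.

Lemma mono_gaS : mono_ord gaS.
Proof.
move=> a b ab; have := ltn_ord a; have := ltn_ord b; rewrite /gaS => ha hb.
rewrite !inord_val; lia.
Qed.

Lemma unit_sq_eq : forall t : 'I_2, alV (gaV t) = alS (gaS t).
Proof.
case=> [[|[|t]]] // ht; apply: val_inj; rewrite /alV /alS /gaV /gaS /=.
- by rewrite !inord_val ?addn0 ?leqnn //; lia.
- rewrite !inord_val ?addn1 ?ltnn //; lia.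
Qed.

(* the comparison functor  X_{n-1} -> X_{\{i\}} x^R_{X_{\{i,i+1\}}} X_n,
   i.e.  d_{\{i\}} x s_i *)
Definition unit_map (C : Category) (T : Functor C C) :=
  @sq_map C T m 0 m.+1 1 alV mono_alV alS mono_alS gaV mono_gaV gaS mono_gaS
    unit_sq_eq.
End UnitMaps.

Definition NC_is_2Segal (C : Category) (T : Functor C C) : Prop :=
  forall (n i j : nat) (Hn : 3 <= n) (Hij : i < j) (Hjn : j <= n),
    is_equivalence (segal_map Hij Hjn T).

Definition NC_is_unital_2Segal (C : Category) (T : Functor C C) : Prop :=
  @NC_is_2Segal C T /\
  forall (m i : nat) (Hm : 1 <= m) (Him : i <= m),
    is_equivalence (unit_map Him T).
Arguments NC_is_2Segal : clear implicits.
Arguments NC_is_unital_2Segal : clear implicits.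

(* Main.v *)
From mathcomp Require Import all_boot zify.
From Stdlib Require Import ProofIrrelevance FunctionalExtensionality IndefiniteDescription.
Require Import Defs.

Set Implicit Arguments.
Unset Strict Implicit.
Unset Printing Implicit Defensive.

Lemma cA (K : Category) (a b c d : K) (h : hom c d) (g : hom b c) (f : hom a b) :
  compm h (compm g f) = compm (compm h g) f.
Proof. exact: compA. Qed.

Section Gen.
Variable K : Category.

Definition inv (a b : K) (f : hom a b) (H : is_iso f) : hom b a :=
  proj1_sig (constructive_indefinite_description _ H).

Lemma invL (a b : K) (f : hom a b) (H : is_iso f) : compm (inv H) f = idm a.
Proof. by rewrite /inv; case: constructive_indefinite_description => g [? ?]. Qed.

Lemma invR (a b : K) (f : hom a b) (H : is_iso f) : compm f (inv H) = idm b.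
Proof. by rewrite /inv; case: constructive_indefinite_description => g [? ?]. Qed.

Lemma inv_iso (a b : K) (f : hom a b) (H : is_iso f) : is_iso (inv H).
Proof. by exists f; rewrite invL invR. Qed.

Lemma inv_uniq (a b : K) (f : hom a b) (g : hom b a) :
  compm f g = idm b -> forall H : is_iso f, inv H = g.
Proof.
move=> fg H; transitivity (compm (inv H) (compm f g)); first by rewrite fg compm1.
by rewrite compA invL comp1m.
Qed.
End Gen.

Lemma fmap_iso (A B : Category) (F : Functor A B) (a b : A) (f : hom a b) :
  is_iso f -> is_iso (fmap F f).
Proof.
by case=> g [g1 g2]; exists (fmap F g); rewrite -!fmap_comp g1 g2 !fmap_id.
Qed.

Section NCgen.
Variables (C : Category) (T : Functor C C).

Lemma vg_pi n (A : NCob T n) (i j : 'I_n.+1) (H H' : i <= j) : vg A H = vg A H'.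
Proof. by rewrite (bool_irrelevance H H'). Qed.
Lemma vh_pi n (A : NCob T n) (i j : 'I_n.+1) (H H' : i <= j) : vh A H = vh A H'.
Proof. by rewrite (bool_irrelevance H H'). Qed.

Lemma vgC n (A : NCob T n) (x y z : 'I_n.+1) (H1 : x <= y) (H2 : y <= z) :
  compm (vg A H2) (vg A H1) = vg A (leq_trans H1 H2).
Proof. exact: vg_comp. Qed.

Lemma vg_iso_eq n (A : NCob T n) (i j : 'I_n.+1) (H : i <= j) :
  nat_of_ord i = nat_of_ord j -> is_iso (vg A H).
Proof. move/val_inj=> E; subst j; rewrite vg_id; exact: iso_id. Qed.

Definition NC_inv n (A B : NCob T n) (f : NChom A B) : NChom B A.
Proof.
refine (@NCHom C T n B A (fun t => inv (hu_iso f t))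
          (fun t => inv_iso (hu_iso f t)) _ _).
- move=> i j H.
  transitivity (compm (compm (inv (hu_iso f j)) (compm (vg B H) (hu f i)))
                      (inv (hu_iso f i))).
    by rewrite -!compA invR compm1.
  by rewrite -(hu_g f H) !compA invL comp1m.
- move=> i j H.
  transitivity (compm (compm (fmap T (inv (hu_iso f i)))
                      (compm (vh B H) (hu f j))) (inv (hu_iso f j))).
    by rewrite -!compA invR compm1.
  by rewrite -(hu_h f H) !compA -fmap_comp invL fmap_id comp1m.
Defined.

Lemma NC_all_iso n (A B : NC T n) (f : hom A B) : is_iso f.
Proof.
exists (NC_inv f); split; apply: NChom_ext => t /=; [exact: invL | exact: invR].
Qed.
End NCgen.

Section PbIso.
Variables (A B C : Category) (F : Functor A B) (G : Functor C B).

Lemma pb_iso (x y : Pullback F G) (f : hom x y) :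
  is_iso (pb_u f) -> is_iso (pb_v f) -> is_iso f.
Proof.
move=> Hu Hv.
have sq : compm (fmap G (inv Hv)) (pb_phi y) = compm (pb_phi x) (fmap F (inv Hu)).
  transitivity (compm (compm (fmap G (inv Hv)) (compm (pb_phi y) (fmap F (pb_u f))))
                      (fmap F (inv Hu))).
    by rewrite -!compA -fmap_comp invR fmap_id compm1.
  by rewrite -(pb_sq f) !compA -fmap_comp invL fmap_id comp1m.
exists (PbHom sq); split; apply: pb_hom_ext => /=;
  by rewrite ?invL ?invR.
Qed.
End PbIso.
Ltac pi := solve [repeat f_equal; apply: bool_irrelevance].

Section Glue.
Variables (C : Category) (T : Functor C C) (R : Type) (le : R -> R -> bool).

Record Diag := Dg {
  obR : R -> C;
  gR : forall r r', le r r' -> hom (obR r) (obR r');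
  hR : forall r r', le r r' -> hom (obR r') (T (obR r));
  gR_id : forall r (H : le r r), gR H = idm (obR r);
  gR_comp : forall r1 r2 r3 (H12 : le r1 r2) (H23 : le r2 r3) (H13 : le r1 r3),
     compm (gR H23) (gR H12) = gR H13;
  hR_g : forall r1 r2 r3 (H12 : le r1 r2) (H23 : le r2 r3) (H13 : le r1 r3),
     compm (hR H13) (gR H23) = hR H12;
  gR_h : forall r1 r2 r3 (H12 : le r1 r2) (H23 : le r2 r3) (H13 : le r1 r3),
     compm (fmap T (gR H12)) (hR H13) = hR H23 }.

Lemma gR_pi (D : Diag) r r' (H H' : le r r') : gR D H = gR D H'.
Proof. by rewrite (bool_irrelevance H H'). Qed.

Variables (n : nat) (reg : 'I_n.+1 -> R)
  (mreg : forall s t : 'I_n.+1, s <= t -> le (reg s) (reg t)).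

Definition glue (D : Diag) : NCob T n.
Proof.
refine (@NCOb C T n (fun t => obR D (reg t)) (fun s t H => gR D (mreg H))
          (fun s t H => hR D (mreg H)) _ _ _ _).
- move=> i H; exact: gR_id.
- move=> *; exact: gR_comp.
- move=> *; exact: hR_g.
- move=> *; exact: gR_h.
Defined.

Definition glue_hom (D D' : Diag) (m : forall r, hom (obR D r) (obR D' r))
  (miso : forall r, is_iso (m r))
  (M1 : forall r r' (H : le r r'), compm (m r') (gR D H) = compm (gR D' H) (m r))
  (M2 : forall r r' (H : le r r'), compm (fmap T (m r)) (hR D H) = compm (hR D' H) (m r')) :
  NChom (glue D) (glue D').
Proof.
refine (@NCHom C T n (glue D) (glue D') (fun t => m (reg t)) (fun t => miso _) _ _).
- move=> s t H /=; exact: M1.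
- move=> s t H /=; exact: M2.
Defined.
End Glue.
Inductive Reg (dA dB : nat) := RA of 'I_dA.+1 | RB of 'I_dB.+1.
Arguments RA {dA dB}. Arguments RB {dA dB}.

Definition leR (dA dB i : nat) (r r' : Reg dA dB) : bool :=
  match r, r' with
  | RA a, RA a' => a <= a'
  | RB b, RB b' => b <= b'
  | RB b, RA _ => b <= i
  | RA _, RB b => i < b
  end.

Lemma leR_trans dA dB i (r1 r2 r3 : Reg dA dB) :
  leR i r1 r2 -> leR i r2 r3 -> leR i r1 r3.
Proof. case: r1 r2 r3 => [a1|b1] [a2|b2] [a3|b3] /=; lia. Qed.

Section SegalDiag.
Variables (C : Category) (T : Functor C C) (dA dB i : nat)
  (A : NCob T dA) (B : NCob T dB) (a0 ad : 'I_dA.+1) (bi bi1 : 'I_dB.+1).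
Hypotheses (Ha0 : nat_of_ord a0 = 0) (Had : nat_of_ord ad = dA)
  (Hbi : nat_of_ord bi = i) (Hbi1 : nat_of_ord bi1 = i.+1).

Lemma lA0 (a : 'I_dA.+1) : a0 <= a. Proof. by rewrite Ha0. Qed.
Lemma lAd (a : 'I_dA.+1) : a <= ad. Proof. by rewrite Had -ltnS ltn_ord. Qed.
Lemma lBbi (b : 'I_dB.+1) : b <= i -> b <= bi. Proof. by rewrite Hbi. Qed.
Lemma lBbi1 (b : 'I_dB.+1) : b <= i -> b <= bi1. Proof. rewrite Hbi1; lia. Qed.
Lemma lbi1B (b : 'I_dB.+1) : i < b -> bi1 <= b. Proof. by rewrite Hbi1. Qed.
Lemma lbiB (b : 'I_dB.+1) : i < b -> bi <= b. Proof. rewrite Hbi; lia. Qed.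
Lemma l0d : a0 <= ad. Proof. exact: lA0. Qed.
Lemma lbb1 : bi <= bi1. Proof. rewrite Hbi Hbi1; lia. Qed.

Variables (p0 : hom (vx A a0) (vx B bi)) (q0 : hom (vx B bi) (vx A a0))
  (p1 : hom (vx A ad) (vx B bi1)).
Hypotheses (pq0 : compm p0 q0 = idm _) (qp0 : compm q0 p0 = idm _)
  (R1 : compm p1 (vg A l0d) = compm (vg B lbb1) p0)
  (R3 : compm (fmap T p0) (vh A l0d) = compm (vh B lbb1) p1).

Lemma R1' (H : a0 <= ad) : compm p1 (vg A H) = compm (vg B lbb1) p0.
Proof. by rewrite (vg_pi A H l0d). Qed.

Let Rg := Reg dA dB.
Let le := @leR dA dB i.

Definition sobR (r : Rg) : C := match r with RA a => vx A a | RB b => vx B b end.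

Definition sgR (r r' : Rg) : le r r' -> hom (sobR r) (sobR r') :=
  match r, r' return le r r' -> hom (sobR r) (sobR r') with
  | RA a, RA a' => fun H => vg A H
  | RB b, RB b' => fun H => vg B H
  | RB b, RA a => fun H => compm (vg A (lA0 a)) (compm q0 (vg B (lBbi H)))
  | RA a, RB b => fun H => compm (vg B (lbi1B H)) (compm p1 (vg A (lAd a)))
  end.

Definition shR (r r' : Rg) : le r r' -> hom (sobR r') (T (sobR r)) :=
  match r, r' return le r r' -> hom (sobR r') (T (sobR r)) with
  | RA a, RA a' => fun H => vh A H
  | RB b, RB b' => fun H => vh B H
  | RB b, RA a => fun H => compm (vh B (lBbi1 H)) (compm p1 (vg A (lAd a)))
  | RA a, RB b => fun H => compm (fmap T (vg A (lA0 a))) (compm (fmap T q0) (vh B (lbiB H)))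
  end.

Lemma vgcA (x y z : 'I_dA.+1) (H1 : x <= y) (H2 : y <= z) :
  compm (vg A H2) (vg A H1) = vg A (leq_trans H1 H2).
Proof. exact: vg_comp. Qed.
Lemma vgcB (x y z : 'I_dB.+1) (H1 : x <= y) (H2 : y <= z) :
  compm (vg B H2) (vg B H1) = vg B (leq_trans H1 H2).
Proof. exact: vg_comp. Qed.

Lemma sgR_id r (H : le r r) : sgR H = idm (sobR r).
Proof. by case: r H => [a|b] H /=; rewrite vg_id. Qed.

Lemma sgR_comp r1 r2 r3 (H12 : le r1 r2) (H23 : le r2 r3) (H13 : le r1 r3) :
  compm (sgR H23) (sgR H12) = sgR H13.
Proof.
case: r1 r2 r3 H12 H23 H13 => [a1|b1] [a2|b2] [a3|b3] /= H12 H23 H13.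
- rewrite vgcA; pi.
- rewrite -!compA vgcA; pi.
- by exfalso; rewrite /le /= in H12 H23; lia.
- rewrite !compA vgcB; pi.
- rewrite !compA vgcA; pi.
- rewrite -!compA (cA (vg A _) (vg A _)) vgcA (cA p1) R1' -!compA.
  rewrite (cA p0) pq0 comp1m !compA !vgcB; pi.
- rewrite -!compA vgcB; pi.
- rewrite vgcB; pi.
Qed.

Lemma shR_g r1 r2 r3 (H12 : le r1 r2) (H23 : le r2 r3) (H13 : le r1 r3) :
  compm (shR H13) (sgR H23) = shR H12.
Proof.
case: r1 r2 r3 H12 H23 H13 => [a1|b1] [a2|b2] [a3|b3] /= H12 H23 H13.
- exact: vh_g.
- rewrite -!compA (cA (vh B _)) (vh_g B lbb1) (cA (vh B _) p1) -R3 -!compA.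
  rewrite (cA (fmap T q0)) -fmap_comp qp0 fmap_id comp1m.
  rewrite (vh_g A (lA0 a2)) (vg_h A _ H12); pi.
- by exfalso; rewrite /le /= in H12 H23; lia.
- rewrite -!compA (vh_g B (lbiB H12)); pi.
- rewrite -!compA vgcA; pi.
- rewrite compA (vh_g B (lBbi1 H12)); pi.
- rewrite -!compA (cA (vg A _) (vg A _)) vgcA (cA p1) R1' -!compA.
  rewrite (cA p0) pq0 comp1m vgcB (vh_g B H12); pi.
- exact: vh_g.
Qed.

Lemma sgR_h r1 r2 r3 (H12 : le r1 r2) (H23 : le r2 r3) (H13 : le r1 r3) :
  compm (fmap T (sgR H12)) (shR H13) = shR H23.
Proof.
case: r1 r2 r3 H12 H23 H13 => [a1|b1] [a2|b2] [a3|b3] /= H12 H23 H13.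
- exact: vg_h.
- rewrite compA -fmap_comp vgcA; pi.
- by exfalso; rewrite /le /= in H12 H23; lia.
- rewrite !fmap_comp -!compA (cA (fmap T (vg A _)) (fmap T (vg A _))) -fmap_comp vgcA.
  rewrite (cA (fmap T p1)) -fmap_comp R1' fmap_comp -!compA.
  rewrite (cA (fmap T p0)) -fmap_comp pq0 fmap_id comp1m.
  rewrite compA -fmap_comp vgcB (vg_h B _ H23); pi.
- rewrite !fmap_comp -!compA [compm (fmap T (vg B _)) _]cA (vg_h B _ lbb1).
  rewrite [compm (vh B _) (compm p1 _)]cA -R3 -!compA.
  rewrite [compm (fmap T q0) _]cA -fmap_comp qp0 fmap_id comp1m.
  rewrite (vh_g A (lA0 a3)) (vg_h A _ H23); pi.
- rewrite !fmap_comp -!compA (vg_h B _ (lbiB H23)); pi.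
- rewrite compA (vg_h B _ (lBbi1 H23)); pi.
- exact: vg_h.
Qed.

Definition SDiag : Diag T le :=
  @Dg C T Rg le sobR sgR shR sgR_id sgR_comp shR_g sgR_h.
End SegalDiag.
Section DiagSq.
Variables (C : Category) (T : Functor C C) (R : Type) (le : R -> R -> bool)
  (le_trans : forall r1 r2 r3, le r1 r2 -> le r2 r3 -> le r1 r3) (D : Diag T le).

Lemma gR_sq r1 r2 s1 s2 (H1 : le r1 r2) (H2 : le s1 s2) (K1 : le r1 s1) (K2 : le r2 s2) :
  compm (gR D K2) (gR D H1) = compm (gR D H2) (gR D K1).
Proof. by rewrite !(gR_comp D _ _ (le_trans H1 K2)). Qed.

Lemma hR_sq r1 r2 s1 s2 (H1 : le r1 r2) (H2 : le s1 s2) (K1 : le r1 s1) (K2 : le r2 s2) :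
  compm (fmap T (gR D K1)) (hR D H1) = compm (hR D H2) (gR D K2).
Proof.
rewrite -(hR_g D H1 K2 (le_trans H1 K2)) cA.
by rewrite (gR_h D K1 H2).
Qed.
End DiagSq.

Section EqHom.
Variables (C : Category) (T : Functor C C).
Lemma eqhom_vg1 n (X : NCob T n) (s a b : 'I_n.+1) (e : a = b) (H : s <= a) (H' : s <= b) :
  compm (eqhom (vx X) e) (vg X H) = vg X H'.
Proof. by case: b / e H' => H' /=; rewrite comp1m (bool_irrelevance H H'). Qed.

Lemma eqhom_inv n (x : 'I_n.+1 -> C) (a b : 'I_n.+1) (e : a = b) :
  compm (eqhom x e) (eqhom x (esym e)) = idm _.
Proof. by case: b / e; rewrite /= comp1m. Qed.
End EqHom.

Section SegalMor.
Variables (C : Category) (T : Functor C C) (dA dB i : nat)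
  (A A' : NCob T dA) (B B' : NCob T dB) (a0 ad : 'I_dA.+1) (bi bi1 : 'I_dB.+1).
Hypotheses (Ha0 : nat_of_ord a0 = 0) (Had : nat_of_ord ad = dA)
  (Hbi : nat_of_ord bi = i) (Hbi1 : nat_of_ord bi1 = i.+1).
Variables (p0 : hom (vx A a0) (vx B bi)) (q0 : hom (vx B bi) (vx A a0))
  (p1 : hom (vx A ad) (vx B bi1))
  (p0' : hom (vx A' a0) (vx B' bi)) (q0' : hom (vx B' bi) (vx A' a0))
  (p1' : hom (vx A' ad) (vx B' bi1)).
Hypotheses (pq0 : compm p0 q0 = idm _) (qp0' : compm q0' p0' = idm _).
Variables (u : NChom A A') (v : NChom B B').
Hypotheses (S0 : compm (hu v bi) p0 = compm p0' (hu u a0))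
  (S1 : compm (hu v bi1) p1 = compm p1' (hu u ad)).

Definition smap (r : Reg dA dB) : hom (sobR A B r) (sobR A' B' r) :=
  match r with RA a => hu u a | RB b => hu v b end.

Lemma SQ0 : compm (hu u a0) q0 = compm q0' (hu v bi).
Proof.
transitivity (compm (compm q0' p0') (compm (hu u a0) q0)); first by rewrite qp0' comp1m.
by rewrite -compA [compm p0' _]cA -S0 -compA pq0 compm1.
Qed.

Lemma smap_g r r' (H : leR i r r') :
  compm (smap r') (sgR Ha0 Had Hbi Hbi1 q0 p1 H) =
  compm (sgR Ha0 Had Hbi Hbi1 q0' p1' H) (smap r).
Proof.
case: r r' H => [a|b] [a'|b'] /= H.
- exact: hu_g.
- rewrite !compA (hu_g v) -!compA [compm (hu v bi1) (compm p1 _)]cA S1 -!compA (hu_g u).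
  by rewrite -?compA.
- rewrite !compA (hu_g u) -!compA [compm (hu u a0) (compm q0 _)]cA SQ0 -!compA (hu_g v).
  by rewrite -?compA.
- exact: hu_g.
Qed.

Lemma smap_h r r' (H : leR i r r') :
  compm (fmap T (smap r)) (shR Ha0 Had Hbi Hbi1 q0 p1 H) =
  compm (shR Ha0 Had Hbi Hbi1 q0' p1' H) (smap r').
Proof.
case: r r' H => [a|b] [a'|b'] /= H.
- exact: hu_h.
- rewrite -!compA -(hu_h v) [compm (fmap T q0') (compm _ _)]cA -fmap_comp -SQ0.
  rewrite fmap_comp -!compA [compm (fmap T (vg A' _)) (compm (fmap T (hu u a0)) _)]cA.
  by rewrite -fmap_comp -(hu_g u) fmap_comp -?compA.
- rewrite [compm (fmap T _) _]cA (hu_h v) -!compA [compm (hu v bi1) _]cA S1 -!compA.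
  by rewrite (hu_g u) -?compA.
- exact: hu_h.
Qed.
End SegalMor.
Section SegalEq.
Variables (C : Category) (T : Functor C C) (n i j : nat) (Hij : i < j) (Hjn : j <= n).

Local Notation dA := (j - i).
Local Notation dB := (n - (j - i)).+1.
Local Notation Rg := (Reg dA dB).
Local Notation le := (@leR dA dB i).
Local Notation PB := (Pullback (res T (mono_gaI i j)) (res T (mono_gaJ Hij Hjn))).
Local Notation F := (segal_map Hij Hjn T).

Definition o0 : 'I_2 := ord0.
Definition o1 : 'I_2 := ord_max.
Definition a0s := gaI i j o0.
Definition ads := gaI i j o1.
Definition bis := gaJ n i j o0.
Definition bi1s := gaJ n i j o1.

Lemma Ha0s : nat_of_ord a0s = 0.
Proof. by rewrite /a0s /gaI /= mul0n inord_val. Qed.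
Lemma Hads : nat_of_ord ads = dA.
Proof. by rewrite /ads /gaI /= mul1n inord_val. Qed.
Lemma Hbis : nat_of_ord bis = i.
Proof. rewrite /bis /gaJ /= inord_val; lia. Qed.
Lemma Hbi1s : nat_of_ord bi1s = i.+1.
Proof. rewrite /bi1s /gaJ /= inord_val; lia. Qed.

Definition reg (s : 'I_n.+1) : Rg :=
  if s <= i then RB (inord s) else if s <= j then RA (inord (s - i))
  else RB (inord (s - (j - i) + 1)).

Lemma mono_reg (s t : 'I_n.+1) : s <= t -> le (reg s) (reg t).
Proof.
move=> H; have := ltn_ord s; have := ltn_ord t; rewrite /reg => hs ht.
case: (leqP s i) => h1; case: (leqP s j) => h2; case: (leqP t i) => h3;
  case: (leqP t j) => h4 /=; rewrite ?inord_val; lia.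
Qed.

Section Obj.
Variable x : PB.
Definition p0x : hom (vx (pb_a x) a0s) (vx (pb_c x) bis) := hu (pb_phi x) o0.
Definition p1x : hom (vx (pb_a x) ads) (vx (pb_c x) bi1s) := hu (pb_phi x) o1.
Definition q0x : hom (vx (pb_c x) bis) (vx (pb_a x) a0s) := hu (inv (pb_phi_iso x)) o0.
Lemma pq0x : compm p0x q0x = idm _.
Proof. exact: (congr1 (fun f : NChom _ _ => hu f o0) (invR (pb_phi_iso x))). Qed.
Lemma qp0x : compm q0x p0x = idm _.
Proof. exact: (congr1 (fun f : NChom _ _ => hu f o0) (invL (pb_phi_iso x))). Qed.
Lemma R1x (H1 : a0s <= ads) (H2 : bis <= bi1s) :
  compm p1x (vg (pb_a x) H1) = compm (vg (pb_c x) H2) p0x.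
Proof.
rewrite (bool_irrelevance H1 (mono_gaI i j (isT : o0 <= o1))).
rewrite (bool_irrelevance H2 (mono_gaJ Hij Hjn (isT : o0 <= o1))).
exact: (hu_g (pb_phi x) (isT : o0 <= o1)).
Qed.
Lemma R3x (H1 : a0s <= ads) (H2 : bis <= bi1s) :
  compm (fmap T p0x) (vh (pb_a x) H1) = compm (vh (pb_c x) H2) p1x.
Proof.
rewrite (bool_irrelevance H1 (mono_gaI i j (isT : o0 <= o1))).
rewrite (bool_irrelevance H2 (mono_gaJ Hij Hjn (isT : o0 <= o1))).
exact: (hu_h (pb_phi x) (isT : o0 <= o1)).
Qed.

Definition Dx : Diag T le :=
  @SDiag C T dA dB i (pb_a x) (pb_c x) a0s ads bis bi1s Ha0s Hads Hbis Hbi1s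
    p0x q0x p1x pq0x qp0x (R1x _ _) (R3x _ _).
Definition Gob : NCob T n := glue mono_reg Dx.
End Obj.

Section Mor.
Variables (x y : PB) (f : hom x y).
Lemma S0f : compm (hu (pb_v f) bis) (p0x x) = compm (p0x y) (hu (pb_u f) a0s).
Proof. exact: (congr1 (fun g : NChom _ _ => hu g o0) (pb_sq f)). Qed.
Lemma S1f : compm (hu (pb_v f) bi1s) (p1x x) = compm (p1x y) (hu (pb_u f) ads).
Proof. exact: (congr1 (fun g : NChom _ _ => hu g o1) (pb_sq f)). Qed.

Definition Ghom : NChom (Gob x) (Gob y).
Proof.
refine (@glue_hom C T Rg le n reg mono_reg (Dx x) (Dx y) (smap (pb_u f) (pb_v f)) _ _ _).
- by case=> [a|b]; exact: hu_iso.
- move=> r r' H; exact: (smap_g Ha0s Hads Hbis Hbi1s (pq0x x) (qp0x y) S0f S1f H).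
- move=> r r' H; exact: (smap_h Ha0s Hads Hbis Hbi1s (pq0x x) (qp0x y) S0f S1f H).
Defined.
End Mor.

Definition Gfun : Functor PB (NC T n).
Proof.
refine (@Fun PB (NC T n) Gob Ghom _ _).
- by move=> x; apply: NChom_ext => t /=; case: (reg t).
- by move=> x y z f g; apply: NChom_ext => t /=; case: (reg t).
Defined.

Arguments Dx : simpl never.

Lemma val_alI (t : 'I_dA.+1) : nat_of_ord (alI n t) = i + t.
Proof. have ht := ltn_ord t; rewrite /alI inord_val //; lia. Qed.
Lemma val_alJ (b : 'I_dB.+1) :
  nat_of_ord (alJ b) = if b <= i then nat_of_ord b else b + (j - i) - 1.
Proof. have hb := ltn_ord b; rewrite /alJ; case: (leqP b i) => h; rewrite inord_val //; lia. Qed.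

Lemma le_alI (t : 'I_dA.+1) : le (reg (alI n t)) (RA t).
Proof.
have := ltn_ord t; rewrite /reg val_alI => ht.
case: (leqP (i + t) i) => h1; case: (leqP (i + t) j) => h2 /=; rewrite ?inord_val; lia.
Qed.

Lemma le_alJ (t : 'I_dB.+1) : le (reg (alJ t)) (RB t).
Proof.
have := ltn_ord t; rewrite /reg val_alJ => ht.
case: (leqP t i) => h0 /=.
  rewrite h0 /= inord_val; lia.
case: (leqP (t + (j - i) - 1) i) => h1; case: (leqP (t + (j - i) - 1) j) => h2 /=;
  rewrite ?inord_val; lia.
Qed.

Lemma pos_alI (t : 'I_dA.+1) :
  match reg (alI n t) with
  | RA a => nat_of_ord a = t | RB b => nat_of_ord b = i /\ nat_of_ord t = 0 end.
Proof.
have := ltn_ord t; rewrite /reg val_alI => ht.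
case: (leqP (i + t) i) => h1; case: (leqP (i + t) j) => h2 /=; rewrite ?inord_val; lia.
Qed.

Lemma pos_alJ (t : 'I_dB.+1) :
  match reg (alJ t) with
  | RA a => nat_of_ord a = dA /\ nat_of_ord t = i.+1 | RB b => nat_of_ord b = t end.
Proof.
have := ltn_ord t; rewrite /reg val_alJ => ht.
case: (leqP t i) => h0 /=.
  rewrite h0 /= inord_val; lia.
case: (leqP (t + (j - i) - 1) i) => h1; case: (leqP (t + (j - i) - 1) j) => h2 /=;
  rewrite ?inord_val; lia.
Qed.

Lemma q0x_iso x : is_iso (q0x x).
Proof. by exists (p0x x); rewrite pq0x qp0x. Qed.

Lemma iso_toA x (t : 'I_dA.+1) r (H : le r (RA t)) :
  match r with RA a => nat_of_ord a = t | RB b => nat_of_ord b = i /\ nat_of_ord t = 0 end ->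
  is_iso (gR (Dx x) H).
Proof.
rewrite /Dx; case: r H => [a|b] /= H E; first exact: vg_iso_eq.
case: E => E1 E2; apply: iso_comp; first apply: iso_comp.
- by apply: vg_iso_eq; rewrite Hbis.
- exact: q0x_iso.
- by apply: vg_iso_eq; rewrite Ha0s.
Qed.

Lemma iso_toB x (t : 'I_dB.+1) r (H : le r (RB t)) :
  match r with RA a => nat_of_ord a = dA /\ nat_of_ord t = i.+1 | RB b => nat_of_ord b = t end ->
  is_iso (gR (Dx x) H).
Proof.
rewrite /Dx; case: r H => [a|b] /= H E; last exact: vg_iso_eq.
case: E => E1 E2; apply: iso_comp; first apply: iso_comp.
- by apply: vg_iso_eq; rewrite Hads.
- exact: (hu_iso (pb_phi x) o1).
- by apply: vg_iso_eq; rewrite Hbi1s.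
Qed.

Section Eps.
Variable x : PB.

Definition epsu : NChom (res T (mono_alI Hij Hjn) (Gob x)) (pb_a x).
Proof.
refine (@NCHom C T dA (res T (mono_alI Hij Hjn) (Gob x)) (pb_a x) (fun t => gR (Dx x) (le_alI t)) (fun t => iso_toA x (le_alI t) (pos_alI t)) _ _).
- move=> s t H.
  exact: (gR_sq (@leR_trans dA dB i) (Dx x) (r1 := reg (alI n s)) (r2 := reg (alI n t))
            (s1 := RA s) (s2 := RA t)).
- move=> s t H.
  exact: (hR_sq (@leR_trans dA dB i) (Dx x) (r1 := reg (alI n s)) (r2 := reg (alI n t))
            (s1 := RA s) (s2 := RA t)).
Defined.

Definition epsv : NChom (res T (mono_alJ Hij Hjn) (Gob x)) (pb_c x).
Proof.
refine (@NCHom C T dB (res T (mono_alJ Hij Hjn) (Gob x)) (pb_c x) (fun t => gR (Dx x) (le_alJ t)) (fun t => iso_toB x (le_alJ t) (pos_alJ t)) _ _).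
- move=> s t H.
  exact: (gR_sq (@leR_trans dA dB i) (Dx x) (r1 := reg (alJ s)) (r2 := reg (alJ t))
            (s1 := RB s) (s2 := RB t)).
- move=> s t H.
  exact: (hR_sq (@leR_trans dA dB i) (Dx x) (r1 := reg (alJ s)) (r2 := reg (alJ t))
            (s1 := RB s) (s2 := RB t)).
Defined.
End Eps.

Lemma eqhom_gR x (s s' : 'I_n.+1) (e : s = s') r (K : le (reg s') r) (K' : le (reg s) r) :
  compm (gR (Dx x) K) (eqhom (vx (Gob x)) e) = gR (Dx x) K'.
Proof. case: s' / e K => K; rewrite /eqhom /= compm1; by rewrite (bool_irrelevance K K'). Qed.

Lemma sq0 x r (K : le r (RB bis)) (K' : le r (RA a0s)) :
  match r with RB b => nat_of_ord b = i | RA _ => False end ->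
  gR (Dx x) K = compm (p0x x) (gR (Dx x) K').
Proof.
rewrite /Dx; case: r K K' => [a|b] //= K K' E.
rewrite vg_id comp1m cA pq0x comp1m; exact: vg_pi.
Qed.

Lemma sq1 x r (K : le r (RB bi1s)) (K' : le r (RA ads)) :
  match r with RA a => nat_of_ord a = dA | RB _ => False end ->
  gR (Dx x) K = compm (p1x x) (gR (Dx x) K').
Proof.
rewrite /Dx; case: r K K' => [a|b] //= K K' E.
rewrite vg_id comp1m; congr (compm _ _); exact: vg_pi.
Qed.

Lemma v_a0 : nat_of_ord (alI n a0s) = i.
Proof. by rewrite val_alI Ha0s addn0. Qed.
Lemma v_ad : nat_of_ord (alI n ads) = j.
Proof. rewrite val_alI Hads; lia. Qed.
Lemma v_bi : nat_of_ord (alJ bis) = i.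
Proof. by rewrite val_alJ Hbis leqnn. Qed.
Lemma v_bi1 : nat_of_ord (alJ bi1s) = j.
Proof. rewrite val_alJ Hbi1s ltnn; lia. Qed.

Lemma pos0 : match reg (alI n (gaI i j o0)) with RB b => nat_of_ord b = i | RA _ => False end.
Proof. by rewrite /reg -/a0s v_a0 leqnn /= inord_val //; lia. Qed.
Lemma pos1 : match reg (alI n (gaI i j o1)) with RA a => nat_of_ord a = dA | RB _ => False end.
Proof.
rewrite /reg -/ads v_ad leqNgt Hij /= leqnn /= inord_val //; lia.
Qed.

Lemma I2_cases (t : 'I_2) : t = o0 \/ t = o1.
Proof. by case: t => [[|[|?]]] // ?; [left|right]; apply: val_inj. Qed.

Definition epsH (x : PB) : hom (F (Gfun x)) x.
Proof.
refine (@PbHom _ _ _ _ _ (F (Gfun x)) x (epsu x) (epsv x) _).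
apply: NChom_ext => t /=.
have K' : le (reg (alI n (gaI i j t))) (RB (gaJ n i j t)).
  by rewrite (segal_sq_eq Hij Hjn t); exact: le_alJ.
rewrite (eqhom_gR x _ _ K').
case: (I2_cases t) => E; subst t.
- exact: (sq0 x K' (le_alI _) pos0).
- exact: (sq1 x K' (le_alI _) pos1).
Defined.

Lemma vgc (X : NCob T n) (x y z : 'I_n.+1) (H1 : x <= y) (H2 : y <= z) :
  compm (vg X H2) (vg X H1) = vg X (leq_trans H1 H2).
Proof. exact: vg_comp. Qed.

Lemma eqhom_vh1 (X : NCob T n) (a a' b : 'I_n.+1) (e : a = a') (P : a <= b) (P' : a' <= b) :
  compm (fmap T (eqhom (vx X) e)) (vh X P) = vh X P'.
Proof. case: a' / e P' => P'; rewrite /eqhom /= fmap_id comp1m; exact: vh_pi. Qed.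

Section Eta.
Variable X : NC T n.

Lemma q0F : q0x (F X) = eqhom (vx X) (esym (segal_sq_eq Hij Hjn o0)).
Proof.
rewrite /q0x.
have E : @compm (NC T 1) _ _ _ (pb_phi (F X))
   (sq_theta_inv (mono_alI Hij Hjn) (mono_alJ Hij Hjn) (mono_gaI i j)
      (mono_gaJ Hij Hjn) (segal_sq_eq Hij Hjn) X) = idm _.
  by apply: NChom_ext => t /=; exact: eqhom_inv.
by rewrite (inv_uniq E).
Qed.

Definition idx (r : Rg) : 'I_n.+1 := match r with RA a => alI n a | RB b => alJ b end.

Lemma idx_reg (t : 'I_n.+1) : nat_of_ord (idx (reg t)) = t.
Proof.
have ht := ltn_ord t; rewrite /reg.
case: (leqP t i) => h1 /=.
  by rewrite val_alJ inord_val ?h1 //; lia.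
case: (leqP t j) => h2 /=.
  rewrite val_alI inord_val; lia.
rewrite val_alJ inord_val; [|lia].
have -> : (t - (j - i) + 1 <= i) = false by lia.
lia.
Qed.

Definition etaR (r : Rg) (s : 'I_n.+1) : s <= idx r -> hom (vx X s) (obR (Dx (F X)) r) :=
  match r return s <= idx r -> hom (vx X s) (obR (Dx (F X)) r) with
  | RA a => fun H => vg X H
  | RB b => fun H => vg X H
  end.

Lemma etaR_iso r (s : 'I_n.+1) (H : s <= idx r) : nat_of_ord (idx r) = s -> is_iso (etaR H).
Proof. by case: r H => [a|b] /= H E; apply: vg_iso_eq. Qed.

Lemma etaR_vg r (s t : 'I_n.+1) (H : s <= t) (Ht : t <= idx r) (Hs : s <= idx r) :
  compm (etaR Ht) (vg X H) = etaR Hs.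
Proof. by case: r Ht Hs => [a|b] /= Ht Hs; exact: vg_comp. Qed.

Lemma etaR_gR r r' (K : le r r') (s : 'I_n.+1) (Hs : s <= idx r) (Hs' : s <= idx r') :
  compm (gR (Dx (F X)) K) (etaR Hs) = etaR Hs'.
Proof.
rewrite /Dx; case: r r' K Hs Hs' => [a|b] [a'|b'] /= K Hs Hs'.
- exact: vg_comp.
- rewrite -!compA vgc.
  have h : s <= alJ bi1s.
    move: Hs; rewrite val_alI v_bi1; have := ltn_ord a; lia.
  rewrite (eqhom_vg1 X _ _ h) vgc; exact: vg_pi.
- rewrite q0F -!compA vgc.
  have h : s <= alI n a0s.
    rewrite v_a0; move: Hs; rewrite val_alJ K; lia.
  rewrite (eqhom_vg1 X _ _ h) vgc; exact: vg_pi.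
- exact: vg_comp.
Qed.

Lemma etaR_hR r r' (K : le r r') (s t : 'I_n.+1) (H : s <= t) (Hs : s <= idx r) (Ht : t <= idx r') :
  nat_of_ord (idx r) = s -> nat_of_ord (idx r') = t ->
  compm (fmap T (etaR Hs)) (vh X H) = compm (hR (Dx (F X)) K) (etaR Ht).
Proof.
rewrite /Dx; case: r r' K Hs Ht => [a|b] [a'|b'] /= K Hs Ht Er Er'.
- have h1 : alI n a <= t by rewrite Er.
  rewrite (vg_h X _ h1) (vh_g X h1); exact: vh_pi.
- have h2 : alI n a <= t by rewrite Er.
  have P' : alI n a0s <= alJ b'.
    rewrite v_a0 val_alJ; move: K; case: ifP => _; lia.
  rewrite (vg_h X _ h2) q0F (eqhom_vh1 X _ _ P') -!compA.
  have h : alI n a0s <= t by rewrite v_a0 -Er' val_alJ; move: K; case: ifP => _; lia.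
  rewrite (vh_g X h) (vg_h X _ h2); exact: vh_pi.
- have h : alJ b <= t by rewrite Er.
  have h' : t <= alJ bi1s by rewrite -Er' val_alI v_bi1; have := ltn_ord a'; lia.
  rewrite (vg_h X _ h) -!compA vgc (eqhom_vg1 X _ _ h') (vh_g X h); exact: vh_pi.
- have h1 : alJ b <= t by rewrite Er.
  rewrite (vg_h X _ h1) (vh_g X h1); exact: vh_pi.
Qed.

Lemma Hreg (t : 'I_n.+1) : t <= idx (reg t).
Proof. by rewrite idx_reg. Qed.

Definition etaX : NChom X (Gob (F X)).
Proof.
refine (@NCHom C T n X (Gob (F X)) (fun t => etaR (Hreg t))
          (fun t => etaR_iso (Hreg t) (idx_reg t)) _ _).
- move=> s t H.
  have Hst : s <= idx (reg t) by rewrite idx_reg.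
  rewrite (etaR_vg H (Hreg t) Hst).
  exact: (esym (etaR_gR (mono_reg H) (Hreg s) Hst)).
- move=> s t H.
  exact: (etaR_hR (mono_reg H) H (Hreg s) (Hreg t) (idx_reg s) (idx_reg t)).
Defined.
End Eta.

Lemma etaR_nat (X Y : NC T n) (f : NChom X Y) r (s : 'I_n.+1) (H : s <= idx r) :
  compm (etaR Y H) (hu f s) =
  compm (smap (fmap (res T (mono_alI Hij Hjn)) f) (fmap (res T (mono_alJ Hij Hjn)) f) r)
        (etaR X H).
Proof. by case: r H => [a|b] H /=; rewrite (hu_g f). Qed.

Lemma segal_equiv : is_equivalence F.
Proof.
exists Gfun, etaX, epsH; split.
- move=> a; exact: NC_all_iso.
- move=> b; apply: pb_iso; exact: NC_all_iso.
- move=> a a' f; apply: NChom_ext => t /=; exact: etaR_nat.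
- move=> b b' g; apply: pb_hom_ext => /=; apply: NChom_ext => t /=.
  + exact: (smap_g Ha0s Hads Hbis Hbi1s (pq0x b) (qp0x b') (S0f g) (S1f g) (le_alI t)).
  + exact: (smap_g Ha0s Hads Hbis Hbi1s (pq0x b) (qp0x b') (S0f g) (S1f g) (le_alJ t)).
Qed.

End SegalEq.
Section UnitEq.
Variables (C : Category) (T : Functor C C) (m i : nat) (Him : i <= m).

Local Notation PB := (Pullback (res T mono_gaV) (res T (mono_gaS Him))).
Local Notation F := (unit_map Him T).

Definition dl (t : 'I_m.+1) : 'I_m.+2 := inord (if t <= i then nat_of_ord t else t.+1).

Lemma val_dl t : nat_of_ord (dl t) = if t <= i then nat_of_ord t else t.+1.
Proof. have ht := ltn_ord t; rewrite /dl inord_val //; case: ifP; lia. Qed.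

Lemma mono_dl : mono_ord dl.
Proof. move=> a b ab; rewrite !val_dl; case: ifP; case: ifP; lia. Qed.


Lemma val_alS (t : 'I_m.+2) : nat_of_ord (alS i t) = if t <= i then nat_of_ord t else t.-1.
Proof. rewrite /alS inord_val //; move: (nat_of_ord t) (ltn_ord t) => [|k] hk /=; repeat case: ifP; lia. Qed.

Lemma Hsd (t : 'I_m.+1) : t <= alS i (dl t).
Proof. rewrite val_alS val_dl; move: (nat_of_ord t) (ltn_ord t) => [|k] hk /=; repeat case: ifP => /=; lia. Qed.
Lemma val_sd (t : 'I_m.+1) : nat_of_ord (alS i (dl t)) = t.
Proof. rewrite val_alS val_dl; move: (nat_of_ord t) (ltn_ord t) => [|k] hk /=; repeat case: ifP => /=; lia. Qed.

Lemma hv (t : 'I_m.+2) : dl (alS i t) <= t.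
Proof. rewrite val_dl val_alS; move: (nat_of_ord t) (ltn_ord t) => [|k] hk /=; repeat case: ifP => /=; lia. Qed.

Definition g0 := gaS m i o0.
Definition g1 := gaS m i o1.
Lemma val_g0 : nat_of_ord g0 = i.
Proof. rewrite /g0 /gaS /= inord_val; lia. Qed.
Lemma val_g1 : nat_of_ord g1 = i.+1.
Proof. rewrite /g1 /gaS /= inord_val; lia. Qed.
Lemma lg01 : g0 <= g1.
Proof. by rewrite val_g0 val_g1. Qed.

Lemma val_dlV (t : 'I_1) : nat_of_ord (dl (alV m i t)) = i.
Proof. rewrite val_dl /alV inord_val // leqnn //. Qed.

Lemma hc (t : 'I_1) : dl (alV m i t) <= g0.
Proof. by rewrite val_dlV val_g0. Qed.

Lemma hv_iso_cases (t : 'I_m.+2) :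
  nat_of_ord (dl (alS i t)) = t \/ (nat_of_ord (dl (alS i t)) = i /\ nat_of_ord t = i.+1).
Proof. rewrite val_dl val_alS; move: (nat_of_ord t) (ltn_ord t) => [|k] hk /=; repeat case: ifP => /=; lia. Qed.

Lemma I1z (t : 'I_1) : nat_of_ord t = 0.
Proof. by case: t => [[|]]. Qed.

Section UObj.
Variable x : PB.
Local Notation A := (pb_a x).
Local Notation B := (pb_c x).
Definition up0 : hom (vx A ord0) (vx B g0) := hu (pb_phi x) o0.
Definition up1 : hom (vx A ord0) (vx B g1) := hu (pb_phi x) o1.
Definition uq0 : hom (vx B g0) (vx A ord0) := hu (inv (pb_phi_iso x)) o0.
Lemma upq0 : compm up0 uq0 = idm _.
Proof. exact: (congr1 (fun f : NChom _ _ => hu f o0) (invR (pb_phi_iso x))). Qed.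
Lemma uqp0 : compm uq0 up0 = idm _.
Proof. exact: (congr1 (fun f : NChom _ _ => hu f o0) (invL (pb_phi_iso x))). Qed.

Lemma Rp1 : up1 = compm (vg B lg01) up0.
Proof.
rewrite /up1 /up0.
have := hu_g (pb_phi x) (isT : o0 <= o1); rewrite /= vg_id compm1 => ->.
congr (compm _ _); exact: vg_pi.
Qed.

Lemma Rq (K : g0 <= g0) (K' : @nat_of_ord 1 ord0 <= ord0) :
  compm (fmap T uq0) (vh B K) = compm (vh A K') uq0.
Proof.
have E := hu_h (pb_phi x) (isT : o0 <= o0).
transitivity (compm (fmap T uq0) (compm (compm (vh B K) up0) uq0)).
  by rewrite -compA upq0 compm1.
rewrite (vh_pi B K (mono_gaS Him (isT : o0 <= o0))).
rewrite -[compm (vh B _) up0]E !compA -fmap_comp uqp0 fmap_id comp1m.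
congr (compm _ _); exact: vh_pi.
Qed.

Lemma vg01_iso : is_iso (vg B lg01).
Proof.
have -> : vg B lg01 = compm up1 uq0 by rewrite Rp1 -compA upq0 compm1.
apply: iso_comp; first by exists up0; rewrite upq0 uqp0.
exact: (hu_iso (pb_phi x) o1).
Qed.

Lemma vhv_iso (t : 'I_m.+2) : is_iso (vg B (hv t)).
Proof.
case: (hv_iso_cases t) => [E|[E1 E2]]; first exact: vg_iso_eq.
have h1 : dl (alS i t) <= g0 by rewrite E1 val_g0.
have h2 : g1 <= t by rewrite E2 val_g1.
rewrite -(vg_comp B (leq_trans h1 lg01) h2) -(vg_comp B h1 lg01).
apply: iso_comp; first apply: iso_comp.
- by apply: vg_iso_eq; rewrite E1 val_g0.
- exact: vg01_iso.
- by apply: vg_iso_eq; rewrite E2 val_g1.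
Qed.

Definition uu_c (t : 'I_1) : hom (vx B (dl (alV m i t))) (vx A t) :=
  compm (vg A (leq0n t : @nat_of_ord 1 ord0 <= t)) (compm uq0 (vg B (hc t))).

Lemma uq0_iso : is_iso uq0.
Proof. by exists up0; rewrite upq0 uqp0. Qed.

Definition uepsu : NChom (res T (mono_alV m i) (res T mono_dl B)) A.
Proof.
refine (@NCHom C T 0 (res T (mono_alV m i) (res T mono_dl B)) A uu_c _ _ _).
- move=> t; rewrite /uu_c; apply: iso_comp; first apply: iso_comp.
  + by apply: vg_iso_eq; rewrite val_dlV val_g0.
  + exact: uq0_iso.
  + by apply: vg_iso_eq; rewrite (I1z t).
- move=> s t H; rewrite /uu_c /= vg_id compm1 !compA (vg_comp A).
  congr (compm (compm _ _) _); exact: vg_pi.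
- move=> s t H; rewrite /uu_c /=.
  have hs : s <= @ord0 0 by rewrite I1z.
  have h : g0 <= dl (alV m i s) by rewrite val_dlV val_g0.
  rewrite !fmap_comp -!compA (vg_h B _ h).
  rewrite -(vh_g B h (hc s) (leqnn g0)) [compm (fmap T uq0) (compm _ _)]cA.
  rewrite (Rq _ (leqnn 0)) -!compA [compm (fmap T _) (compm (vh A _) _)]cA (vg_h A _ hs).
  rewrite [RHS]cA (vh_g A hs) -?compA; congr (compm _ (compm _ _)); exact: vg_pi.
Defined.

Definition uepsv : NChom (res T (mono_alS Him) (res T mono_dl B)) B.
Proof.
refine (@NCHom C T m.+1 (res T (mono_alS Him) (res T mono_dl B)) B
          (fun t => vg B (hv t)) vhv_iso _ _).
- move=> s t H /=; rewrite !vgc; exact: vg_pi.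
- move=> s t H /=.
  by rewrite -(vh_g B _ (hv t) (leq_trans (hv s) H)) cA (vg_h B _ H).
Defined.
End UObj.

Lemma eqhom_dl (B : NCob T m.+1) (a b : 'I_m.+1) (e : a = b) (c : 'I_m.+2)
  (K : dl b <= c) (K' : dl a <= c) :
  compm (vg B K) (eqhom (vx (res T mono_dl B)) e) = vg B K'.
Proof. case: b / e K => K; rewrite /eqhom /= compm1; exact: vg_pi. Qed.

Definition UGfun : Functor PB (NC T m).
Proof.
refine (@Fun PB (NC T m) (fun x => res T mono_dl (pb_c x))
          (fun x y f => fmap (res T mono_dl) (pb_v f)) _ _).
- move=> x; exact: (fmap_id (res T mono_dl) (pb_c x)).
- move=> x y z f g; exact: (fmap_comp (res T mono_dl) (pb_v f) (pb_v g)).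
Defined.

Definition uepsH (x : PB) : hom (F (UGfun x)) x.
Proof.
refine (@PbHom _ _ _ _ _ (F (UGfun x)) x (uepsu x) (uepsv x) _).
apply: NChom_ext => t /=.
have K' : dl (alV m i (gaV t)) <= gaS m i t.
  have ht := ltn_ord t; rewrite val_dlV /gaS inord_val; lia.
rewrite (eqhom_dl _ _ _ K').
case: (I2_cases t) => E; subst t.
- rewrite /uu_c vg_id comp1m cA.
  change (hu (pb_phi x) o0) with (up0 x); rewrite upq0 comp1m; exact: vg_pi.
- rewrite /uu_c vg_id comp1m.
  change (hu (pb_phi x) o1) with (up1 x); rewrite Rp1 -compA [compm (up0 x) _]cA upq0 comp1m.
  by rewrite (vg_comp (pb_c x) (hc ord0) lg01 K').
Defined.

Definition uetaX (X : NC T m) : NChom X (res T mono_dl (res T (mono_alS Him) X)).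
Proof.
refine (@NCHom C T m X (res T mono_dl (res T (mono_alS Him) X)) (fun t => vg X (Hsd t)) _ _ _).
- by move=> t; apply: vg_iso_eq; rewrite val_sd.
- move=> s t H /=; rewrite !vgC; exact: vg_pi.
- move=> s t H /=.
  have h : alS i (dl s) <= t by rewrite val_sd.
  rewrite (vg_h X _ h) (vh_g X h); exact: vh_pi.
Defined.

Lemma unit_equiv : is_equivalence F.
Proof.
exists UGfun, uetaX, uepsH; split.
- move=> a; exact: NC_all_iso.
- move=> b; apply: pb_iso; exact: NC_all_iso.
- move=> a a' f; apply: NChom_ext => t /=; by rewrite (hu_g f).
- move=> b b' g; apply: pb_hom_ext => /=; apply: NChom_ext => t /=.
  + have S0 : compm (hu (pb_v g) g0) (up0 b) = compm (up0 b') (hu (pb_u g) ord0).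
      exact: (congr1 (fun h : NChom _ _ => hu h o0) (pb_sq g)).
    have SQ : compm (hu (pb_u g) ord0) (uq0 b) = compm (uq0 b') (hu (pb_v g) g0).
      transitivity (compm (compm (uq0 b') (up0 b')) (compm (hu (pb_u g) ord0) (uq0 b))).
        by rewrite uqp0 comp1m.
      by rewrite -compA [compm (up0 b') _]cA -S0 -compA upq0 compm1.
    rewrite /uu_c !compA (hu_g (pb_u g)) -!compA.
    rewrite [compm (hu (pb_u g) _) (compm (uq0 b) _)]cA SQ -!compA (hu_g (pb_v g)).
    by rewrite -?compA.
  + exact: hu_g.
Qed.

End UnitEq.

Theorem mainTheorem11 (C : Category) (T : Functor C C) : NC_is_unital_2Segal C T.
Proof.
split.
- move=> n i j Hn Hij Hjn; exact: segal_equiv.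
- move=> m i Hm Him; exact: unit_equiv.
Qed.
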